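(* Let $\alpha\in\mathbb{N}_0+\frac12$, $\mathbf m=(m_1,\dots,m_n)\in\mathbb{N}_0^n$ and $(t_{m_1},\dots,t_{m_n})\in\mathbb{R}^n$. Define recursively $\tilde\tau_0=1$, $\tilde\pi_{0;i}=C^{(\alpha)}_i$, $\tilde\rho_{0;i_1i_2}=\rho^{(\alpha)}_{i_1i_2}$, and for $j=1,\dots,n$: $\tilde\tau_j=(1+t_{m_j}\tilde\rho_{j-1;m_jm_j})\tilde\tau_{j-1}$, $\tilde\pi_{j;i}=(1+t_{m_j}\tilde\rho_{j-1;m_jm_j})\tilde\pi_{j-1;i}-t_{m_j}\tilde\rho_{j-1;im_j}\tilde\pi_{j-1;m_j}$ ($i\in\mathbb{N}_0$), $\tilde\rho_{j;i_1i_2}=\tilde\rho_{j-1;i_1i_2}-\dfrac{t_{m_j}\tilde\rho_{j-1;i_1m_j}\tilde\rho_{j-1;i_2m_j}}{1+t_{m_j}\tilde\rho_{j-1;m_jm_j}}$ ($i_1,i_2\in\mathbb{N}_0$). Then $\tau^{(\alpha)}_{\mathbf m}=\tilde\tau_n$ and $C^{(\alpha)}_{\mathbf m;i}=\tilde\pi_{n;i}$ for all $i\in\mathbb{N}_0$. In particular all $\tilde\tau_j,\tilde\pi_{j;i}$ are polynomials in $z$.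
   Context: $C^{(\alpha)}_i(z)=\sum_{k=0}^{\lfloor i/2\rfloor}(-1)^k\frac{\Gamma(i-k+\alpha)}{\Gamma(\alpha)k!(i-2k)!}(2z)^{i-2k}$ are the classical Gegenbauer polynomials; $W^{(\alpha)}(z)=(1-z^2)^{\alpha-1/2}$. For $i,j\in\mathbb{N}_0$, $\rho^{(\alpha)}_{ij}(z)=\int_{-1}^zC^{(\alpha)}_i(u)C^{(\alpha)}_j(u)W^{(\alpha)}(u)\,du$ (a polynomial since $\alpha\in\mathbb{N}_0+\frac12$). For $\mathbf m=(m_1,\dots,m_n)\in\mathbb{N}_0^n$ with real parameters $(t_{m_1},\dots,t_{m_n})$, $\mathcal R^{(\alpha)}_{\mathbf m}$ is the $n\times n$ matrix with entries $[\mathcal R^{(\alpha)}_{\mathbf m}]_{k\ell}=\delta_{k\ell}+t_{m_\ell}\rho^{(\alpha)}_{m_km_\ell}(z)$; $\tau^{(\alpha)}_{\mathbf m}=\det\mathcal R^{(\alpha)}_{\mathbf m}$; $\mathbf Q^{(\alpha)}_{\mathbf m}=\tau^{(\alpha)}_{\mathbf m}(\mathcal R^{(\alpha)}_{\mathbf m})^{-1}(C^{(\alpha)}_{m_1},\dots,C^{(\alpha)}_{m_n})^T$. For $i\in\mathbb{N}_0$, $C^{(\alpha)}_{\mathbf m;i}$ is the $(n+1)$-st entry of $\mathbf Q^{(\alpha)}_{(m_1,\dots,m_n,i)}$ computed with parameters $(t_{m_1},\dots,t_{m_n},s)$, $s\in\mathbb{R}$ arbitrary (the entry does not depend on $s$).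 *)

(* Defs.v *)
From mathcomp Require Import all_boot all_order all_algebra fraction.
Set Implicit Arguments. Unset Strict Implicit. Unset Printing Implicit Defensive.
Import Order.TTheory GRing.Theory Num.Theory.
Local Open Scope ring_scope.

Section Defs.
Variable R : realFieldType.

Definition alph (k : nat) : R := k%:R + 2^-1.

(* rising factorial (a)_m = Gamma(m + a) / Gamma(a) *)
Definition rising (a : R) (m : nat) : R := \prod_(r < m) (a + r%:R).

(* Gegenbauer polynomial C^{(a)}_i(z)
   = sum_{q=0}^{floor(i/2)} (-1)^q Gamma(i-q+a)/(Gamma(a) q! (i-2q)!) (2z)^(i-2q) *)
Definition gegen (a : R) (i : nat) : {poly R} :=
  \sum_(q < i./2.+1)
     (((-1) ^+ q * rising a (i - q)%N / ((q`!)%:R * ((i - 2 * q)`!)%N%:R))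
        * 2 ^+ (i - 2 * q)%N) *: 'X^(i - 2 * q)%N.

(* weight W^{(alpha)}(u) = (1-u^2)^{alpha - 1/2} = (1-u^2)^k for alpha = k+1/2 *)
Definition weight (k : nat) : {poly R} := (1 - 'X^2) ^+ k.

Definition prim (p : {poly R}) : {poly R} :=
  \poly_(j < (size p).+1) (if j is j'.+1 then p`_j' / (j'.+1)%:R else 0).

(* rho^{(alpha)}_{ij}(z) = int_{-1}^z C_i C_j W du  (alpha = k + 1/2) *)
Definition rho (k i j : nat) : {poly R} :=
  let P := prim (gegen (alph k) i * gegen (alph k) j * weight k) in
  P - (P.[-1])%:P.

Notation F := {fraction {poly R}}.

Definition pF (p : {poly R}) : F := @FracField.tofrac {poly R} p.
Definition cF (c : R) : F := pF c%:P.

(* the n x n matrix R_m with [R_m]_{kl} = delta_{kl} + t_{m_l} rho_{m_k m_l}(z);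
   m_1..m_n are m 0 .. m (n-1), the parameter attached to position l is t l *)
Definition Rmat (k n : nat) (m : nat -> nat) (t : nat -> R) : 'M[F]_n :=
  \matrix_(a < n, b < n) ((a == b)%:R + cF (t b) * pF (rho k (m a) (m b))).

Definition tau (k n : nat) (m : nat -> nat) (t : nat -> R) : F :=
  \det (Rmat k n m t).

Definition Cvec (k n : nat) (m : nat -> nat) : 'cV[F]_n :=
  \col_(a < n) pF (gegen (alph k) (m a)).

Definition Qvec (k n : nat) (m : nat -> nat) (t : nat -> R) : 'cV[F]_n :=
  tau k n m t *: (invmx (Rmat k n m t) *m Cvec k n m).

Definition ext {T : Type} (n : nat) (f : nat -> T) (x : T) : nat -> T :=
  fun j => if j == n then x else f j.

Definition Cm (k n : nat) (m : nat -> nat) (t : nat -> R) (i : nat) (s : R) : F :=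
  Qvec k n.+1 (ext n m i) (ext n t s) ord_max 0.

Fixpoint tilde (k : nat) (m : nat -> nat) (t : nat -> R) (j : nat)
  : F * (nat -> F) * (nat -> nat -> F) :=
  match j with
  | 0 => (1, fun i => pF (gegen (alph k) i), fun i1 i2 => pF (rho k i1 i2))
  | j'.+1 =>
      let: (ta, pi, rh) := tilde k m t j' in
      let mj := m j' in
      let tj := cF (t j') in
      let d := 1 + tj * rh mj mj in
      (d * ta,
       fun i => d * pi i - tj * rh i mj * pi mj,
       fun i1 i2 => rh i1 i2 - tj * rh i1 mj * rh i2 mj / d)
  end.

Definition tauT k m t j : F := (tilde k m t j).1.1.
Definition piT k m t j (i : nat) : F := (tilde k m t j).1.2 i.
Definition rhoT k m t j (i1 i2 : nat) : F := (tilde k m t j).2 i1 i2.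

End Defs.

(* Main.v *)
Require Import Defs.
From mathcomp Require Import all_boot all_order all_algebra fraction.
From mathcomp Require Import ring.
Set Implicit Arguments. Unset Strict Implicit. Unset Printing Implicit Defensive.
Import Order.TTheory GRing.Theory Num.Theory.
Local Open Scope ring_scope.

Section Schur.
Variable F : fieldType.

Lemma schur j (M : 'M[F]_(1 + j)) : M (lshift j ord0) (lshift j ord0) != 0 ->
  \det M = M (lshift j ord0) (lshift j ord0) *
    \det (\matrix_(a, b) (M (rshift 1 a) (rshift 1 b) -
       M (rshift 1 a) (lshift j ord0) * M (lshift j ord0) (rshift 1 b) /
         M (lshift j ord0) (lshift j ord0))).
Proof.
set x := M _ _ => x0.
pose L : 'M[F]_(1 + j) := block_mx 1%:M 0 (- (x^-1) *: dlsubmx M) 1%:M.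
have dL : \det L = 1 by rewrite det_lblock !det1 mulr1.
have : \det (L *m M) = \det M by rewrite det_mulmx dL mul1r.
rewrite -{1}(submxK M) mulmx_block !mul1mx !mul0mx !addr0.
have Ea : ulsubmx M = x%:M.
  apply/matrixP => a b; by rewrite !ord1 !mxE /= mulr1n.
rewrite Ea mul_mx_scalar scalerA mulrN mulfV // scaleN1r addNr det_ublock det_scalar1 => <-.
congr (_ * \det _); apply/matrixP => a b; rewrite !mxE big_ord1 !mxE.
by ring.
Qed.

Lemma cofactor_eq n (M N : 'M[F]_n) j0 : (forall a b, b != j0 -> N a b = M a b) ->
  forall a, cofactor N a j0 = cofactor M a j0.
Proof.
move=> H a; rewrite /cofactor; congr (_ * \det _); apply/matrixP => i k; rewrite !mxE.
by apply: H; rewrite eq_sym neq_lift.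
Qed.

Lemma det_scale_col n (M N : 'M[F]_n) j0 c : (forall a b, b != j0 -> N a b = M a b) ->
  (forall a, N a j0 = c * M a j0) -> \det N = c * \det M.
Proof.
move=> H1 H2; rewrite (expand_det_col N j0) (expand_det_col M j0) big_distrr.
apply: eq_bigr => a _; rewrite H2 (cofactor_eq H1 a) -mulrA; reflexivity.
Qed.

Lemma auxS (T r1 r2 d : F) : T * r1 * r2 / d = T * r2 * r1 / d.
Proof. by rewrite -(mulrA T) (mulrC r1) mulrA. Qed.
Lemma auxA (X T T0 r1 r2 r3 r3' d : F) : r3 = r3' ->
  X + T * r1 - (false%:R + T0 * r2) * (false%:R + T * r3) / d =
  X + T * (r1 - T0 * r2 * r3' / d).
Proof. move=> ->; rewrite mulr0n !add0r; ring. Qed.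
Lemma auxB (p T0 r q d : F) : d != 0 ->
  p - (false%:R + T0 * r) * q / d = d^-1 * (d * p - T0 * r * q).
Proof. move=> dn; rewrite mulr0n add0r mulrBr mulrA mulVf // mul1r; ring. Qed.
End Schur.
Lemma eqRR j (a b : 'I_j) : (rshift 1 a == rshift 1 b :> 'I_j.+1) = (a == b).
Proof. by []. Qed.
Lemma eqRL j (a : 'I_j) : (rshift 1 a == lshift j (@ord0 0) :> 'I_j.+1) = false.
Proof. by []. Qed.
Lemma eqLR j (a : 'I_j) : (lshift j (@ord0 0) == rshift 1 a :> 'I_j.+1) = false.
Proof. by []. Qed.

Section V.
Variable R : realFieldType.
Local Notation FF := {fraction {poly R}}.

Lemma pFM (p q : {poly R}) : pF (p * q) = pF p * pF q. Proof. exact: tofracM. Qed.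
Lemma pFD (p q : {poly R}) : pF (p + q) = pF p + pF q. Proof. exact: tofracD. Qed.
Lemma pFB (p q : {poly R}) : pF (p - q) = pF p - pF q. Proof. exact: tofracB. Qed.
Lemma pF1 : pF (1 : {poly R}) = 1. Proof. exact: tofrac1. Qed.
Lemma pFn n : pF (n%:R : {poly R}) = n%:R. Proof. by rewrite /pF rmorph_nat. Qed.
Lemma pF_eq0 (p : {poly R}) : (pF p == 0) = (p == 0). Proof. exact: tofrac_eq0. Qed.

Definition V0 (x : FF) := exists p q : {poly R},
  [/\ q.[-1] != 0, p.[-1] = 0 & x = pF p / pF q].
Definition Gd (x : FF) := exists p q : {poly R}, q.[-1] != 0 /\ x = pF p / pF q.

Lemma nz_of {q : {poly R}} : q.[-1] != 0 -> pF q != 0.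
Proof. by rewrite pF_eq0; apply: contra => /eqP ->; rewrite horner0. Qed.

Lemma V0_sub x y : V0 x -> V0 y -> V0 (x - y).
Proof.
move=> [p1 [q1 [h1 e1 ->]]] [p2 [q2 [h2 e2 ->]]].
exists (p1 * q2 - p2 * q1), (q1 * q2); split.
- by rewrite hornerM; apply: mulf_neq0.
- by rewrite hornerD hornerN !hornerM e1 e2 !mul0r subrr.
have n1 := nz_of h1; have n2 := nz_of h2.
by rewrite pFB !pFM -(mulNr (pF p2)) (addf_div _ _ n1 n2) mulNr.
Qed.

Lemma V0_mulG x y : V0 x -> Gd y -> V0 (x * y).
Proof.
move=> [p1 [q1 [h1 e1 ->]]] [p2 [q2 [h2 ->]]].
exists (p1 * p2), (q1 * q2); split.
- by rewrite hornerM; apply: mulf_neq0.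
- by rewrite hornerM e1 mul0r.
have n1 := nz_of h1; have n2 := nz_of h2.
by rewrite !pFM mulf_div.
Qed.

Lemma V0_G x : V0 x -> Gd x.
Proof. by move=> [p [q [h _ ->]]]; exists p, q. Qed.

Lemma Gd_cF c : Gd (cF c).
Proof. exists c%:P, 1%:P; split; first by rewrite hornerC oner_neq0. by rewrite polyC1 pF1 divr1. Qed.

Lemma aux1 (K : fieldType) (P Q C : K) : Q != 0 -> 1 + C * (P / Q) = (Q + C * P) / Q.
Proof. move=> nQ; rewrite mulrDl divff // mulrA; reflexivity. Qed.

Lemma aux2 (K : fieldType) (P Q C : K) : Q != 0 -> (1 + C * (P / Q))^-1 = Q / (Q + C * P).
Proof. move=> nQ; rewrite aux1 // invf_div; reflexivity. Qed.

Lemma d_nz c x : V0 x -> 1 + cF c * x != 0.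
Proof.
move=> [p [q [h e ->]]].
have nq := nz_of h.
rewrite (@aux1 _ _ _ _ nq) /cF -pFM -pFD.
apply: mulf_neq0; last by apply: invr_neq0; exact: nq.
apply: nz_of.
by rewrite hornerD hornerM e mulr0 addr0.
Qed.

Lemma Gd_inv c x : V0 x -> Gd ((1 + cF c * x)^-1).
Proof.
move=> [p [q [h e ->]]].
have nq := nz_of h.
have hq : (q + c%:P * p).[-1] != 0 by rewrite hornerD hornerM e mulr0 addr0.
exists q, (q + c%:P * p); split; first exact: hq.
rewrite /cF pFD pFM; exact: aux2 nq.
Qed.
Lemma V0_rho k i j : V0 (pF (rho R k i j)).
Proof.
exists (rho R k i j), 1%:P; split; first by rewrite hornerC oner_neq0.
  by rewrite /rho hornerD hornerN hornerC subrr.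
by rewrite polyC1 pF1 divr1.
Qed.

Lemma rho_sym k i j : rho R k i j = rho R k j i.
Proof. by rewrite /rho (mulrC (gegen _ i)). Qed.
End V.
Lemma eqRM j (a : 'I_j.+1) : (rshift 1 a == ord_max :> 'I_j.+2) = (a == ord_max).
Proof. by []. Qed.
Lemma eqLM j : (lshift j.+1 (@ord0 0) == ord_max :> 'I_j.+2) = false.
Proof. by []. Qed.

Section Main.
Variable R : realFieldType.
Local Notation FF := {fraction {poly R}}.
Definition Tr := (FF * (nat -> FF) * (nat -> nat -> FF))%type.

Definition step (x : Tr) (mj : nat) (tj : FF) : Tr :=
  let: (ta, pi, rh) := x in
      let d := 1 + tj * rh mj mj in
      (d * ta,
       fun i => d * pi i - tj * rh i mj * pi mj,
       fun i1 i2 => rh i1 i2 - tj * rh i1 mj * rh i2 mj / d).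

Fixpoint G (x : Tr) (m : nat -> nat) (t : nat -> R) (j : nat) : Tr :=
  match j with
  | 0 => x
  | j'.+1 =>
      let: (ta, pi, rh) := G x m t j' in
      let mj := m j' in
      let tj := cF (t j') in
      let d := 1 + tj * rh mj mj in
      (d * ta,
       fun i => d * pi i - tj * rh i mj * pi mj,
       fun i1 i2 => rh i1 i2 - tj * rh i1 mj * rh i2 mj / d)
  end.

Lemma G_S x m t j : G x m t j.+1 = step (G x m t j) (m j) (cF (t j)).
Proof. by []. Qed.

Lemma tilde_G k m t j : tilde k m t j =
  G (1, fun i => pF (gegen (alph R k) i), fun i1 i2 => pF (rho R k i1 i2)) m t j.
Proof. elim: j => [|j IH]; first reflexivity. by rewrite /= IH. Qed.

Lemma G_shift x m t j :
  G x m t j.+1 = G (G x m t 1) (fun a => m a.+1) (fun a => t a.+1) j.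
Proof. elim: j => [|j IH]; first reflexivity. by rewrite G_S IH G_S. Qed.


Definition Amat (rh : nat -> nat -> FF) (m : nat -> nat) (t : nat -> R) j : 'M[FF]_j :=
  \matrix_(a < j, b < j) ((a == b)%:R + cF (t b) * rh (m a) (m b)).

Definition Bmat (rh : nat -> nat -> FF) (pi : nat -> FF) (m : nat -> nat) (t : nat -> R)
   (i : nat) j : 'M[FF]_j.+1 :=
  \matrix_(a < j.+1, b < j.+1) (if b == ord_max then pi (ext j m i a)
     else (a == b)%:R + cF (t b) * rh (ext j m i a) (m b)).

Lemma main_gen j : forall ta pi rh m t,
  (forall a b, rh a b = rh b a) -> (forall a b, V0 (rh a b)) ->
  [/\ (G (ta, pi, rh) m t j).1.1 = ta * \det (Amat rh m t j),
      \det (Amat rh m t j) != 0 &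
      forall i, (G (ta, pi, rh) m t j).1.2 i = \det (Bmat rh pi m t i j)].
Proof.
elim: j => [|j IH] ta pi rh m t Hs Hv.
  split; first by rewrite det_mx00 mulr1.
    by rewrite det_mx00 oner_neq0.
  by move=> i; rewrite det_mx11 mxE; reflexivity.
set d := 1 + cF (t 0) * rh (m 0) (m 0).
have dn : d != 0 by apply: d_nz.
pose rh' := fun i1 i2 => rh i1 i2 - cF (t 0) * rh i1 (m 0) * rh i2 (m 0) / d.
pose pi' := fun i => d * pi i - cF (t 0) * rh i (m 0) * pi (m 0).
have Hs' : forall a b, rh' a b = rh' b a.
  by move=> a b; rewrite /rh' (Hs a b) auxS.
have Hv' : forall a b, V0 (rh' a b).
  move=> a b; apply: V0_sub; first exact: Hv.
  rewrite (mulrC (cF _) (rh a (m 0))).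
  apply: V0_mulG; last exact: Gd_inv.
  apply: V0_mulG; last exact: V0_G.
  apply: V0_mulG; first exact: Hv.
  exact: Gd_cF.
have G1 : G (ta, pi, rh) m t 1 = (d * ta, pi', rh') by [].
have [IH1 IH2 IH3] := IH (d * ta) pi' rh' (fun a => m a.+1) (fun a => t a.+1) Hs' Hv'.
have E00 : Amat rh m t j.+1 (lshift j (@ord0 0)) (lshift j (@ord0 0)) = d.
  by rewrite mxE eqxx mulr1n.
have SA : \det (Amat rh m t j.+1) =
    d * \det (Amat rh' (fun a => m a.+1) (fun a => t a.+1) j).
  have := @schur _ j (Amat rh m t j.+1); rewrite E00 => /(_ dn) ->.
  congr (_ * \det _); apply/matrixP => a b; rewrite !mxE eqRR eqRL eqLR.
  by apply: auxA; apply: Hs.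
rewrite G_shift G1; split.
- by rewrite IH1 SA mulrA (mulrC ta).
- by rewrite SA; exact: mulf_neq0 dn IH2.
move=> i; rewrite IH3.
have F00 : Bmat rh pi m t i j.+1 (lshift j.+1 (@ord0 0)) (lshift j.+1 (@ord0 0)) = d.
  by rewrite mxE eqLM eqxx mulr1n.
have := @schur _ j.+1 (Bmat rh pi m t i j.+1); rewrite F00 => /(_ dn) ->.
symmetry.
rewrite (@det_scale_col _ _ (Bmat rh' pi' (fun a => m a.+1) (fun a => t a.+1) i j) _ ord_max d^-1).
- by rewrite mulrA (mulfV dn) mul1r.
- move=> a b nb; rewrite !mxE eqRM (negbTE nb) eqLM eqRR eqRL eqLR.
  by apply: auxA; apply: Hs.
move=> a; rewrite !mxE eqRM eqLM eqRL eqxx.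
exact: auxB dn.
Qed.
End Main.

Theorem mainTheorem15 (R : realFieldType) (k n : nat)
    (m : nat -> nat) (t : nat -> R) :
  tau k n m t = tauT k m t n /\
  (forall (i : nat) (s : R), Cm k n m t i s = piT k m t n i) /\
  (forall j : nat, (j <= n)%N ->
     (exists p : {poly R}, tauT k m t j = pF p) /\
     (forall i : nat, exists p : {poly R}, piT k m t j i = pF p)).
Proof.
pose rh0 := fun i1 i2 => pF (rho R k i1 i2).
pose pi0 := fun i => pF (gegen (alph R k) i).
have Hs : forall a b, rh0 a b = rh0 b a by move=> a b; rewrite /rh0 rho_sym.
have Hv : forall a b, V0 (rh0 a b) by move=> a b; exact: V0_rho.
have MG := fun j m t => main_gen j 1 pi0 m t Hs Hv.
have tT : forall j, tauT k m t j = \det (Amat rh0 m t j).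
  move=> j; rewrite /tauT tilde_G; case: (MG j m t) => -> _ _; exact: mul1r.
have pT : forall j i, piT k m t j i = \det (Bmat rh0 pi0 m t i j).
  move=> j i; rewrite /piT tilde_G; case: (MG j m t) => _ _ ->; reflexivity.
split.
  rewrite tT; reflexivity.
split.
  move=> i s; rewrite pT.
  set Rp := Rmat k n.+1 (ext n m i) (ext n t s).
  have nz : \det Rp != 0 by case: (MG n.+1 (ext n m i) (ext n t s)).
  have U : Rp \in unitmx by rewrite unitmxE unitfE.
  rewrite /Cm /Qvec /invmx -/Rp U -scalemxAl scalerA /tau -/Rp (mulfV nz) scale1r.
  rewrite mxE (expand_det_col _ ord_max); apply: eq_bigr => a _.
  rewrite !mxE mulrC; congr (_ * _).
    by rewrite eqxx.
  apply: cofactor_eq => a' b nb; rewrite !mxE.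
  have hb : (nat_of_ord b == n) = false by exact: negbTE nb.
  rewrite (negbTE nb) /ext hb; reflexivity.
move=> j _; split.
  exists (\det (\matrix_(a < j, b < j) ((a == b)%:R + (t b)%:P * rho R k (m a) (m b)))).
  rewrite tT /pF -det_map_mx; congr (\det _); apply/matrixP => a b.
  rewrite !mxE rmorphD rmorphM rmorph_nat; reflexivity.
move=> i.
exists (\det (\matrix_(a < j.+1, b < j.+1) (if b == ord_max then gegen (alph R k) (ext j m i a)
     else (a == b)%:R + (t b)%:P * rho R k (ext j m i a) (m b)))).
rewrite pT /pF -det_map_mx; congr (\det _); apply/matrixP => a b.
rewrite !mxE; case: (b == ord_max); first reflexivity.
rewrite rmorphD rmorphM rmorph_nat; reflexivity.
Qed.
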